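(* Let $2\le n\le+\infty$ and let $\{a_i\}_{i=1}^n$ be a non-increasing $n$-tuple (sequence if $n=+\infty$) of positive numbers with $\sum_{i=1}^n a_i\le 1$ and $\sum_{i=1}^n\eta(a_i)<+\infty$. Let $I_n=\mathbb{N}\cap[1,n]$, $b>0$, $c\ge0$, and $$\Omega=\Big\{\{x_i\}_{i=1}^n\ :\ x_1\in[0,c],\ x_i\in\mathbb{R},\ x_{i-1}\le x_i\ \forall i\in I_n\setminus\{1\},\ \sum_{i=1}^n a_ix_i=1\Big\}.$$ Then there exists a unique $n$-tuple $\bar{x}_b=\{x^b_i\}_{i=1}^n$ of nonnegative numbers belonging to $\Omega$ such that $$\sum_{i=1}^n e^{-bx^b_i}=\inf\Big\{\sum_{i=1}^n e^{-bx_i}\ :\ \{x_i\}_{i=1}^n\in\Omega\Big\}.$$ Define $d_k=\sum_{i=k+1}^n a_i$ and $s_k=\sum_{i=k+1}^n\eta(a_i)$ for $k\in\{0\}\cup I_{n-1}$, and the non-increasing family $b_0=\frac{s_0+d_0\ln a_1}{1-cd_0}$ if $cd_0<1$, $b_0=+\infty$ if $cd_0\ge1$; $b_k=s_{k-1}+d_{k-1}\ln a_k$ for $k\in I_n$; $b_n=0$ if $n<+\infty$. Then: <ul> <li>If $b\in[b_1,b_0]\cap(0,+\infty)$, then $x^b_i=\frac1b\left(\frac{b-s_0}{d_0}-\ln a_i\right)$ for $i\in I_n$, and $\sum_{i=1}^n e^{-bx^b_i}=d_0e^{\frac{s_0-b}{d_0}}$.</li> <li>If $b\in[b_{k+1},b_k)\cap(0,+\infty)$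 for some $k\in I_{n-1}$, then $x^b_i=0$ for $1\le i\le k$, $x^b_i=\frac1b\left(\frac{b-s_k}{d_k}-\ln a_i\right)$ for $i\in I_n\setminus\{1,\dots,k\}$, and $\sum_{i=1}^n e^{-bx^b_i}=k+d_ke^{\frac{s_k-b}{d_k}}$.</li> <li>If $b_0<+\infty$ and $b>b_0$, then $x^b_1=c$, $x^b_i=\frac1b\left(\frac{b(1-a_1c)-s_1}{d_1}-\ln a_i\right)$ for $i\in I_n\setminus\{1\}$, and $\sum_{i=1}^n e^{-bx^b_i}=e^{-bc}\left(1+d_1e^{\frac{s_1-b(1-cd_0)}{d_1}}\right)$.</li> </ul> For each $i\in I_n$ the function $b\mapsto x^b_i$ is continuous on $(0,+\infty)$. For any $b>0$ and $c>0$ the infimum above equals $$z_c(b)=\sum_{k=0}^{n-1}\mathbf{1}_{B_k}(b)\left(k+d_ke^{\frac{s_k-b}{d_k}}\right)+\mathbf{1}_{B_c}(b)\,e^{-bc}\left(1+d_1e^{\frac{s_1-b(1-cd_0)}{d_1}}\right),$$ where $B_k=[b_{k+1},b_k)$ for $k\in\{0\}\cup I_{n-1}$ and $B_c=[b_0,+\infty)$. If $c=0$, then $b_1=b_0$ and for any $b>0$ the infimum above equals $$z_0(b)=\sum_{k=1}^{n-1}\mathbf{1}_{B'_k}(b)\left(k+d_ke^{\frac{s_k-b}{d_k}}\right),$$ where $B'_k=[b_{k+1},b_k)$ for $k\in I_{n-1}\setminus\{1\}$ and $B'_1=[b_2,+\infty)$.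
   Context: $\eta(x)=-x\ln x$ for $x>0$, $\eta(0)=0$. An $n$-tuple with $n=+\infty$ means a sequence. Intervals $(a,b]$ with $b=+\infty$ mean $(a,+\infty)$. $\mathbf{1}_B$ denotes the indicator function of a set $B$. *)

(* Defs.v *)
From HB Require Import structures.
From mathcomp Require Import all_boot all_order all_algebra.
From mathcomp Require Import all_classical all_reals all_analysis.
Set Implicit Arguments. Unset Strict Implicit. Unset Printing Implicit Defensive.
Import Order.TTheory GRing.Theory Num.Theory.
Local Open Scope ring_scope.

(* n in {2,...,+oo}: n = Some m means n = m, n = None means n = +oo. *)
Definition two_le (n : option nat) : Prop :=
  if n is Some m then (2 <= m)%N else True.

Definition le_n (n : option nat) (k : nat) : bool :=
  if n is Some m then (k <= m)%N else true.
Definition lt_n (n : option nat) (k : nat) : bool :=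
  if n is Some m then (k < m)%N else true.

Definition inI (n : option nat) (i : nat) : bool := (0 < i)%N && le_n n i.

Section Defs.
Variable R : realType.

Definition etaR (x : R) : R := if 0 < x then - (x * ln x) else 0.

(* tail sums d_k = sum_{i=k+1}^n a_i and s_k = sum_{i=k+1}^n etaR(a_i)
   (series of nonnegative terms, read in the extended reals, then as reals;
   under the hypotheses of lemma2 they are finite) *)
Definition dsum (n : option nat) (a : nat -> R) (k : nat) : R :=
  fine (\sum_(0 <= i <oo | (k < i)%N && inI n i) (a i)%:E)%E.
Definition ssum (n : option nat) (a : nat -> R) (k : nat) : R :=
  fine (\sum_(0 <= i <oo | (k < i)%N && inI n i) (etaR (a i))%:E)%E.

Definition bk (n : option nat) (a : nat -> R) (c : R) (k : nat) : \bar R :=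
  if k is k'.+1 then (ssum n a k' + dsum n a k' * ln (a k))%:E
  else if c * dsum n a 0 < 1 then
    ((ssum n a 0 + dsum n a 0 * ln (a 1%N)) / (1 - c * dsum n a 0))%:E
  else +oo%E.

Definition Omega (n : option nat) (a : nat -> R) (c : R) : set (nat -> R) :=
  [set x | [/\ 0 <= x 1%N <= c,
             (forall i, inI n i -> (1 < i)%N -> x i.-1 <= x i) &
             (\sum_(0 <= i <oo | inI n i) (a i * x i)%:E)%E = 1%E]].

Definition Fsum (n : option nat) (b : R) (x : nat -> R) : \bar R :=
  (\sum_(0 <= i <oo | inI n i) (expR (- (b * x i)))%:E)%E.

Definition infOmega (n : option nat) (a : nat -> R) (c b : R) : \bar R :=
  ereal_inf [set Fsum n b x | x in Omega n a c].

Definition inB (n : option nat) (a : nat -> R) (c : R) (k : nat) (b : R) : bool :=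
  ((bk n a c k.+1 <= b%:E) && (b%:E < bk n a c k))%E.

Definition termk (n : option nat) (a : nat -> R) (k : nat) (b : R) : R :=
  k%:R + dsum n a k * expR ((ssum n a k - b) / dsum n a k).

Definition termc (n : option nat) (a : nat -> R) (c b : R) : R :=
  expR (- (b * c)) *
  (1 + dsum n a 1 * expR ((ssum n a 1 - b * (1 - c * dsum n a 0)) / dsum n a 1)).

(* z_c(b); the indicator 1_B(b) * t is written (if b \in B then t else 0) *)
Definition zc (n : option nat) (a : nat -> R) (c b : R) : \bar R :=
  ((\sum_(0 <= k <oo | lt_n n k)
      (if inB n a c k b then (termk n a k b)%:E else 0))
   + (if (bk n a c 0 <= b%:E) then (termc n a c b)%:E else 0))%E.

Definition inB' (n : option nat) (a : nat -> R) (c : R) (k : nat) (b : R) : bool :=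
  if k == 1%N then (bk n a c 2 <= b%:E)%E else inB n a c k b.

Definition z0 (n : option nat) (a : nat -> R) (c b : R) : \bar R :=
  (\sum_(1 <= k <oo | lt_n n k)
      (if inB' n a c k b then (termk n a k b)%:E else 0))%E.

End Defs.

(* Main.v *)
Require Import Defs.
From HB Require Import structures.
From mathcomp Require Import all_boot all_order all_algebra.
From mathcomp Require Import all_classical all_reals all_analysis.
From mathcomp Require Import zify ring lra.
Import Order.TTheory GRing.Theory Num.Theory.
Import numFieldNormedType.Exports.
Local Open Scope classical_set_scope.
Local Open Scope ring_scope.

Section gen.
Variable R : realType.
Implicit Types (f : nat -> R) (Q : pred nat).

Lemma ser_lim f Q (l : R) :
  (fun N => \sum_(0 <= i < N | Q i) f i) @ \oo --> l ->
  (\sum_(0 <= i <oo | Q i) (f i)%:E)%E = l%:E.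
Proof.
move=> h.
have -> : (fun N => (\sum_(0 <= i < N | Q i) (f i)%:E)%E) =
          (fun N => (\sum_(0 <= i < N | Q i) f i)%:E).
  by apply/funext => N; rewrite sumEFin.
apply: cvg_lim => //; apply: cvg_EFin; first by near=> N.
exact: h.
Unshelve. all: by end_near.
Qed.

Lemma ser_fin f Q : (forall i, Q i -> 0 <= f i) ->
  (\sum_(0 <= i <oo | Q i) (f i)%:E < +oo)%E ->
  (fun N => \sum_(0 <= i < N | Q i) f i) @ \oo -->
     fine (\sum_(0 <= i <oo | Q i) (f i)%:E)%E.
Proof.
move=> f0 hfin.
have hc : cvgn (fun N => (\sum_(0 <= i < N | Q i) (f i)%:E)%E).
  by apply: is_cvg_nneseries => i _ /f0; rewrite lee_fin.
have ge0 : (0 <= \sum_(0 <= i <oo | Q i) (f i)%:E)%E.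
  by apply: nneseries_ge0 => i _ /f0; rewrite lee_fin.
have := hc; rewrite -(fineK (_ : (\sum_(0 <= i <oo | Q i) (f i)%:E)%E \is a fin_num)); last first.
  by rewrite ge0_fin_numE.
move=> _.
have hc' := hc.
move/cvg_lim : hc => /= hl.
have : (fun N => (\sum_(0 <= i < N | Q i) (f i)%:E)%E) @ \oo -->
        (fine (\sum_(0 <= i <oo | Q i) (f i)%:E))%:E.
  rewrite fineK ?ge0_fin_numE //.
move/fine_cvg.
apply: cvg_trans; apply: near_eq_cvg; near=> N => /=.
by rewrite sumEFin.
Unshelve. all: by end_near.
Qed.

End gen.

Section gen2.
Variable R : realType.
Implicit Types (f g : nat -> R) (Q : pred nat).

Lemma ser_limm m f Q (l : R) :
  (fun N => \sum_(m <= i < N | Q i) f i) @ \oo --> l ->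
  (\sum_(m <= i <oo | Q i) (f i)%:E)%E = l%:E.
Proof.
move=> h.
have -> : (fun N => (\sum_(m <= i < N | Q i) (f i)%:E)%E) =
          (fun N => (\sum_(m <= i < N | Q i) f i)%:E).
  by apply/funext => N; rewrite sumEFin.
apply: cvg_lim => //; apply: cvg_EFin; first by near=> N.
exact: h.
Unshelve. all: by end_near.
Qed.

Lemma ser_single m g Q k0 : (m <= k0)%N -> Q k0 ->
  (forall k, Q k -> k != k0 -> g k = 0) ->
  (\sum_(m <= k <oo | Q k) (g k)%:E)%E = (g k0)%:E.
Proof.
move=> mk Qk g0; apply: ser_limm.
apply: cvg_near_cst; near=> N.
have hN : (k0 < N)%N by near: N; exists k0.+1 => // p /=.
rewrite big_mkcond (bigD1_seq k0) //=; last 2 first.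
- by rewrite mem_index_iota mk hN.
- by apply: iota_uniq.
rewrite Qk big1 ?addr0 // => i ik; case: ifP => // Qi; exact: g0.
Unshelve. all: by end_near.
Qed.

Lemma ser_zero m g Q : (forall k, Q k -> g k = 0) ->
  (\sum_(m <= k <oo | Q k) (g k)%:E)%E = 0%E.
Proof.
move=> g0; apply: ser_limm.
apply: cvg_near_cst; near=> N; by rewrite big1.
Unshelve. all: by end_near.
Qed.

End gen2.

Section gen3.
Variable R : realType.

Lemma cont_inv_mul (u : R -> R) (b0 : R) : b0 != 0 -> {for b0, continuous u} ->
  {for b0, continuous (fun b : R => b^-1 * u b)}.
Proof.
move=> b00 uc; apply: cvgM => //.
by apply: cvgV => //; exact: cvg_id.
Qed.

Lemma cont_aff (al be : R) (b0 : R) :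
  {for b0, continuous (fun b : R => b * al + be)}.
Proof.
apply: cvgD; last exact: cvg_cst.
by apply: cvgMr_tmp; exact: cvg_id.
Qed.

Lemma glue (f g h : R -> R) (b0 d : R) : 0 < d ->
  {for b0, continuous g} -> {for b0, continuous h} ->
  (forall b, b0 - d <= b -> b <= b0 -> f b = g b) ->
  (forall b, b0 <= b -> b <= b0 + d -> f b = h b) -> {for b0, continuous f}.
Proof.
move=> d0 gc hc hg hh.
have fg : f b0 = g b0 by apply: hg => //; lra.
have fh : f b0 = h b0 by apply: hh => //; lra.
apply/cvgrPdist_lt => e e0.
have G := (cvgrPdist_lt _ _).1 gc e e0.
have H := (cvgrPdist_lt _ _).1 hc e e0.
have I := (cvgrPdist_lt _ _).1 (@cvg_id _ (nbhs b0)) d d0.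
near=> t.
have ht : `|b0 - t| < d by near: t; exact: I.
have [tb|tb] := lerP t b0.
  rewrite fg hg; first by near: t; exact: G.
    by move: ht; rewrite ger0_norm ?subr_ge0 //; lra.
  done.
rewrite fh hh; first by near: t; exact: H.
  exact: ltW.
by move: ht; rewrite ltr0_norm ?subr_lt0 //; lra.
Unshelve. all: by end_near.
Qed.

Lemma ex_gap (x : R) (e : \bar R) : (x%:E < e)%E ->
  exists2 d, 0 < d & ((x + d)%:E <= e)%E.
Proof.
case: e => [r||] //.
  by rewrite lte_fin => xr; exists (r - x); [rewrite subr_gt0 | rewrite subrKC].
by move=> _; exists 1 => //; rewrite leey.
Qed.

Lemma ex_gapL (x : R) (e : \bar R) : 0 < x -> (e < x%:E)%E ->
  exists d, [/\ 0 < d, d < x & (e <= (x - d)%:E)%E].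
Proof.
move=> x0; case: e => [r||] //.
  rewrite lte_fin => rx; have [r0|r0] := lerP 0 r.
    exists ((x - r) / 2); split; rewrite ?lee_fin; lra.
  exists (x / 2); split; rewrite ?lee_fin; lra.
by move=> _; exists (x / 2); split; rewrite ?leNye; lra.
Qed.

End gen3.

Section L2.
Variables (R : realType) (n : option nat) (a : nat -> R) (c : R).
Hypotheses (hn : two_le n)
  (ha_pos : forall i, inI n i -> 0 < a i)
  (ha_noninc : forall i, inI n i -> inI n i.+1 -> a i.+1 <= a i)
  (ha_sum : (\sum_(0 <= i <oo | inI n i) (a i)%:E <= 1)%E)
  (ha_eta : (\sum_(0 <= i <oo | inI n i) (etaR (a i))%:E < +oo)%E)
  (hc : 0 <= c).

Local Notation P := (inI n).
Local Notation D := (dsum n a).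
Local Notation S := (ssum n a).

Lemma a_ge0 i : P i -> 0 <= a i.
Proof. by move/ha_pos/ltW. Qed.

Lemma a_le1 i : P i -> a i <= 1.
Proof.
move=> Pi.
have h1 := @nneseries_lim_ge R (fun j => (a j)%:E) P 0 i.+1.
have : ((\sum_(0 <= j < i.+1 | P j) a j)%:E <= 1)%E.
  rewrite -sumEFin; apply: le_trans ha_sum; apply: h1 => j _ Pj.
  by rewrite lee_fin a_ge0.
rewrite lee_fin big_mkcond big_nat_recr //= Pi -big_mkcond; apply: le_trans.
by rewrite lerDr sumr_ge0 // => j Pj; apply: a_ge0.
Qed.

Lemma eta_ge0 i : P i -> 0 <= etaR (a i).
Proof.
move=> Pi; rewrite /etaR ha_pos // oppr_ge0.
by rewrite mulr_ge0_le0 ?a_ge0 // ln_le0 // a_le1.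
Qed.

Lemma tail_fin (f : nat -> R) k : (forall i, P i -> 0 <= f i) ->
  (\sum_(0 <= i <oo | P i) (f i)%:E < +oo)%E ->
  (\sum_(0 <= i <oo | (k < i)%N && P i) (f i)%:E < +oo)%E.
Proof.
move=> f0; apply: le_lt_trans; apply: subset_lee_nneseries.
- by move=> i /f0; rewrite lee_fin.
- by move=> i /andP[].
Qed.

Lemma a_fin : (\sum_(0 <= i <oo | P i) (a i)%:E < +oo)%E.
Proof. by apply: le_lt_trans ha_sum _; rewrite ltry. Qed.

Lemma cvg_d k : (fun N => \sum_(0 <= i < N | (k < i)%N && P i) a i) @ \oo --> D k.
Proof.
apply: ser_fin; first by move=> i /andP[_ /a_ge0].
exact: tail_fin a_ge0 a_fin.
Qed.

Lemma cvg_s k : (fun N => \sum_(0 <= i < N | (k < i)%N && P i) etaR (a i)) @ \oo --> S k.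
Proof.
apply: ser_fin; first by move=> i /andP[_ /eta_ge0].
exact: tail_fin eta_ge0 ha_eta.
Qed.

Lemma D_ge0 k : 0 <= D k.
Proof.
apply: (closed_cvg (fun x : R => 0 <= x)) (cvg_d k); first exact: closed_ge.
by near=> N; apply: sumr_ge0 => i /andP[_ /a_ge0].
Unshelve. all: by end_near.
Qed.


Lemma ps_peel_gen (f : nat -> R) (Q : pred nat) i N : (0 < i)%N -> Q i ->
  \sum_(0 <= j < N | (i.-1 < j)%N && Q j) f j =
  (if (i < N)%N then f i else 0) + \sum_(0 <= j < N | (i < j)%N && Q j) f j.
Proof.
move=> i0 Qi; elim: N => [|N IH]; first by rewrite !big_geq // add0r.
rewrite big_mkcond big_nat_recr //= -big_mkcond IH.
rewrite [in RHS]big_mkcond big_nat_recr //= -big_mkcond.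
case: (ltngtP N i) => Ni.
- have h1 : (i.-1 < N)%N = false by lia.
  have h2 : (i < N.+1)%N = false by lia.
  have h3 : (i < N)%N = false by lia.
  by rewrite ?h1 ?h2 ?h3 /= ?add0r ?addr0.
- have h1 : (i.-1 < N)%N by lia.
  have h2 : (i < N.+1)%N by lia.
  by rewrite ?h1 ?h2 ?Ni /= addrA.
- subst N.
  have h1 : (i.-1 < i)%N by lia.
  by rewrite ?h1 ?ltnn ?ltnSn ?Qi /= ?add0r ?addr0 addrC.
Qed.

Lemma ps_peel (f : nat -> R) (Q : pred nat) i : (0 < i)%N -> Q i ->
  \forall N \near \oo,
  \sum_(0 <= j < N | (i.-1 < j)%N && Q j) f j =
  f i + \sum_(0 <= j < N | (i < j)%N && Q j) f j.
Proof.
move=> i0 Qi; near=> N; rewrite ps_peel_gen //.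
have hN : (i < N)%N by near: N; exists i.+1 => // p /=.
by rewrite hN.
Unshelve. all: by end_near.
Qed.

Lemma D_peel i : P i -> D i.-1 = a i + D i.
Proof.
move=> Pi; have i0 : (0 < i)%N by case/andP: Pi.
have h : (fun N => \sum_(0 <= j < N | (i.-1 < j)%N && P j) a j) @ \oo --> a i + D i.
  apply: cvg_trans (cvgD (cvg_cst (a i)) (cvg_d i)).
  apply: near_eq_cvg; have := @ps_peel a P i i0 Pi; apply: filterS => N ->; done.
exact: (cvg_unique _ (cvg_d i.-1) h).
Qed.

Lemma S_peel i : P i -> S i.-1 = etaR (a i) + S i.
Proof.
move=> Pi; have i0 : (0 < i)%N by case/andP: Pi.
have h : (fun N => \sum_(0 <= j < N | (i.-1 < j)%N && P j) etaR (a j)) @ \oo --> etaR (a i) + S i.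
  apply: cvg_trans (cvgD (cvg_cst (etaR (a i))) (cvg_s i)).
  apply: near_eq_cvg; have := @ps_peel (fun j => etaR (a j)) P i i0 Pi; apply: filterS => N ->; done.
exact: (cvg_unique _ (cvg_s i.-1) h).
Qed.


Lemma P_lt k : lt_n n k -> P k.+1.
Proof. by case: n => [m|] //= km; rewrite /inI /=. Qed.

Lemma P_le k i : lt_n n k -> (0 < i)%N -> (i <= k)%N -> P i.
Proof.
case: n => [m|] //= km i0 ik; rewrite /inI /= i0 //=.
by apply: leq_trans ik (ltnW km).
Qed.

Lemma P1 : P 1.
Proof. by case: n hn => [m|] //= hm; rewrite /inI /=; lia. Qed.

Lemma P2 : P 2.
Proof. by case: n hn => [m|] //= hm; rewrite /inI /=. Qed.

Lemma lt_n1 : lt_n n 1.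
Proof. by case: n hn => [m|] //= hm; lia. Qed.

Lemma lt_n0 : lt_n n 0.
Proof. by case: n hn => [m|] //= hm; lia. Qed.

Lemma P_pred i : P i -> (1 < i)%N -> P i.-1.
Proof.
case: n => [m|] /andP[i0 /= im] i1; rewrite /inI /=; first by apply/andP; split; lia.
by lia.
Qed.

Lemma D_pos k : lt_n n k -> 0 < D k.
Proof.
move=> /P_lt Pk; have := D_peel (k.+1) Pk; rewrite /= => ->.
by rewrite ltr_wpDr ?D_ge0 ?ha_pos.
Qed.

Lemma a_mono i j : (0 < i)%N -> (i <= j)%N -> P j -> a j <= a i.
Proof.
move=> i0; elim: j => [|j IH]; first by rewrite leqn0 => /eqP ->; case/andP.
rewrite leq_eqVlt => /orP[/eqP -> //| ij] Pj.
have Pj' : P j by apply: (P_pred j.+1 Pj); lia.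
apply: le_trans (ha_noninc j Pj' Pj) _; apply: IH Pj'; lia.
Qed.

Lemma eta_ln (x : R) : 0 < x -> etaR x + x * ln x = 0.
Proof. by move=> x0; rewrite /etaR x0 addNr. Qed.

Lemma bk_eq j : P j -> bk n a c j = (S j + D j * ln (a j))%:E.
Proof.
case: j => [/andP[]//|j] Pj; rewrite /bk.
have := S_peel _ Pj; have := D_peel _ Pj; rewrite /= => -> ->.
congr (_%:E); rewrite mulrDl addrACA eta_ln ?add0r //; exact: ha_pos.
Qed.

Lemma bk_ge0 j : P j -> 0 <= S j + D j * ln (a j).
Proof.
move=> Pj.
have h : (fun N => \sum_(0 <= i < N | (j < i)%N && P i) (etaR (a i) + ln (a j) * a i))
   @ \oo --> S j + ln (a j) * D j.
  apply: cvg_trans (cvgD (cvg_s j) (cvgMl_tmp (a:=ln (a j)) (cvg_d j))).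
  apply: near_eq_cvg; near=> N => /=.
  by rewrite big_split /= -mulr_sumr.
rewrite mulrC; apply: (closed_cvg (fun x : R => 0 <= x)) h; first exact: closed_ge.
near=> N; apply: sumr_ge0 => i /andP[ji Pi].
rewrite /etaR ha_pos //.
have -> : - (a i * ln (a i)) + ln (a j) * a i = a i * (ln (a j) - ln (a i)) by ring.
rewrite mulr_ge0 ?a_ge0 // subr_ge0.
rewrite ler_ln ?posrE ?ha_pos //; apply: a_mono => //; [by case/andP: Pj|lia].
Unshelve. all: by end_near.
Qed.


Lemma bk_S j : bk n a c j.+1 = (S j + D j * ln (a j.+1))%:E.
Proof. by []. Qed.

Definition v1 := S 0 + D 0 * ln (a 1).

Lemma v1_eq : v1 = S 1 + D 1 * ln (a 1).
Proof. by have := bk_eq _ P1; rewrite bk_S => -[]. Qed.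

Lemma v1_ge0 : 0 <= v1.
Proof. by rewrite v1_eq; apply: bk_ge0 P1. Qed.

Lemma bk0_eq : bk n a c 0 =
  if c * D 0 < 1 then (v1 / (1 - c * D 0))%:E else +oo%E.
Proof. by []. Qed.

Lemma bk_step j : (0 < j)%N -> lt_n n j -> (bk n a c j.+1 <= bk n a c j)%E.
Proof.
move=> j0 jn; have Pj : P j by apply: (P_le j j jn j0 (leqnn j)).
rewrite bk_S bk_eq // lee_fin lerD2l ler_wpM2l ?D_ge0 //.
rewrite ler_ln ?posrE ?ha_pos //; first exact: ha_noninc j Pj (P_lt j jn).
Qed.

Lemma bk_step0 : (bk n a c 1 <= bk n a c 0)%E.
Proof.
rewrite bk0_eq; case: ifP => h; last by rewrite leey.
rewrite bk_S -/v1 lee_fin ler_pdivlMr ?subr_gt0 //.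
rewrite ler_piMr ?v1_ge0 // lerBlDr lerDl mulr_ge0 ?D_ge0 //.
Qed.

Lemma bk_chain i j : (i <= j)%N -> le_n n j -> (bk n a c j <= bk n a c i)%E.
Proof.
move=> ij jn; elim: j ij jn => [|j IH]; first by rewrite leqn0 => /eqP ->.
rewrite leq_eqVlt => /orP[/eqP -> //| ij] jn.
have jn' : lt_n n j by case: n jn => [m|] //=.
apply: le_trans (IH ij _); last by case: n jn jn' => [m|] //= ? ?; lia.
case: j {IH ij jn} jn' => [_|j jn]; first exact: bk_step0.
exact: bk_step.
Qed.

Lemma D_last m : n = Some m -> D m = 0.
Proof.
move=> hm; rewrite /dsum hm ser_zero //.
by move=> k /andP[mk /andP[_ /= km]]; lia.
Qed.

Lemma S_last m : n = Some m -> S m = 0.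
Proof.
move=> hm; rewrite /ssum hm ser_zero //.
by move=> k /andP[mk /andP[_ /= km]]; lia.
Qed.

Lemma bk_last m : n = Some m -> bk n a c m = 0%E.
Proof.
move=> hm; have Pm : P m by rewrite hm /inI /=; move: hn; rewrite hm /=; lia.
by rewrite bk_eq // (D_last m hm) (S_last m hm) mul0r addr0.
Qed.

Lemma S_eq j : S j = fine (\sum_(j.+1 <= i <oo | P i) (etaR (a i))%:E)%E.
Proof.
rewrite /ssum [in RHS]eseries_cond; congr fine; apply: eq_eseriesl => i /=.
exact: andbC.
Qed.

Lemma S_cvg0 : S @ \oo --> 0.
Proof.
have -> : S = (fun j => fine (\sum_(j.+1 <= i <oo | P i) (etaR (a i))%:E)%E).
  by apply/funext => j; rewrite S_eq.
apply: (fine_cvg (f := fun j => (\sum_(j.+1 <= i <oo | P i) (etaR (a i))%:E)%E)).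
rewrite (cvg_shiftS (fun N => (\sum_(N <= i <oo | P i) (etaR (a i))%:E)%E)).
apply: nneseries_tail_cvg => //.
by move=> i /eta_ge0; rewrite lee_fin.
Qed.

Lemma ex_bk_lt b : 0 < b -> exists j, (bk n a c j.+1 < b%:E)%E.
Proof.
move=> b0; case E : n => [m|]; rewrite -E.
  exists m.-1; rewrite prednK; first by rewrite (bk_last m E) lte_fin.
  by move: hn; rewrite E /=; lia.
have [N _ hN] := @cvgr_lt R _ _ _ S 0 S_cvg0 b b0.
exists N; rewrite bk_S lte_fin.
have PN : P N.+1 by rewrite /inI E.
apply: le_lt_trans (hN N (leqnn N)).
rewrite gerDl mulr_ge0_le0 ?D_ge0 // ln_le0 // a_le1 //.
Qed.


Lemma tangent (b x y : R) : 0 < b -> y != x ->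
  expR (- (b * x)) * (1 - b * (y - x)) < expR (- (b * y)).
Proof.
move=> b0 yx.
have -> : - (b * y) = - (b * x) + (- (b * (y - x))) by ring.
rewrite expRD ltr_pM2l ?expR_gt0 //.
apply: expR_gt1Dx; rewrite oppr_eq0 mulf_neq0 //; first by rewrite gt_eqF.
by rewrite subr_eq0.
Qed.

Lemma T1 (b lam al x y : R) : 0 < b -> lam * al = b * expR (- (b * x)) ->
  y = x \/ expR (- (b * x)) + lam * (al * x) < expR (- (b * y)) + lam * (al * y).
Proof.
move=> b0 h; have [->|yx] := eqVneq y x; [by left|right].
have := @tangent b x y b0 yx.
have -> : lam * (al * y) = (lam * al) * y by ring.
have -> : lam * (al * x) = (lam * al) * x by ring.
rewrite h.
have -> : expR (- (b * x)) * (1 - b * (y - x)) =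
   expR (- (b * x)) - b * expR (- (b * x)) * y + b * expR (- (b * x)) * x by ring.
lra.
Qed.

Lemma T2 (b lam al y : R) : 0 < b -> b <= lam * al -> 0 <= y ->
  y = 0 \/ expR (- (b * 0)) + lam * (al * 0) < expR (- (b * y)) + lam * (al * y).
Proof.
move=> b0 h y0; have [->|yx] := eqVneq y 0; [by left|right].
have := @tangent b 0 y b0 yx.
rewrite !mulr0 oppr0 expR0 mul1r ?subr0 addr0.
have : b * y <= lam * (al * y) by rewrite mulrA ler_wpM2r.
lra.
Qed.

Lemma T3 (b lam al cc y : R) : 0 < b -> 0 <= lam * al ->
  lam * al <= b * expR (- (b * cc)) -> y <= cc ->
  y = cc \/ expR (- (b * cc)) + lam * (al * cc) < expR (- (b * y)) + lam * (al * y).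
Proof.
move=> b0 h0 h yc; have [->|yx] := eqVneq y cc; [by left|right].
have := @tangent b cc y b0 yx.
have -> : expR (- (b * cc)) * (1 - b * (y - cc)) =
   expR (- (b * cc)) + b * expR (- (b * cc)) * (cc - y) by ring.
have : lam * al * (cc - y) <= b * expR (- (b * cc)) * (cc - y).
  by rewrite ler_wpM2r // subr_ge0.
have -> : lam * (al * y) = lam * al * y by ring.
have -> : lam * (al * cc) = lam * al * cc by ring.
have -> : lam * al * (cc - y) = lam * al * cc - lam * al * y by ring.
lra.
Qed.

Lemma Omega_ge0 y : Omega n a c y -> forall i, P i -> 0 <= y i.
Proof.
case=> /andP[y10 _] ymon _; elim=> [/andP[]//|i IH] Pi.
case: i IH Pi => [_ _|i IH Pi]; first exact: y10.
apply: le_trans (ymon _ Pi _) => //; apply: IH.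
exact: (P_pred i.+2 Pi).
Qed.


Definition Gt b lam (z : nat -> R) i := expR (- (b * z i)) + lam * (a i * z i).

Lemma Gt_ge0 b lam z i : 0 <= lam -> 0 <= z i -> P i -> 0 <= Gt b lam z i.
Proof.
move=> l0 z0 Pi; rewrite /Gt addr_ge0 ?expR_ge0 // mulr_ge0 // mulr_ge0 //.
exact: a_ge0.
Qed.

Lemma sumG b lam z : 0 <= lam -> Omega n a c z ->
  (\sum_(0 <= i <oo | P i) (Gt b lam z i)%:E = Fsum n b z + lam%:E)%E.
Proof.
move=> l0 Oz; have z0 := Omega_ge0 _ Oz.
rewrite /Gt; under eq_eseriesr do rewrite EFinD EFinM.
rewrite nneseriesD; last 2 first.
- by move=> i _ Pi; rewrite lee_fin expR_ge0.
- by move=> i _ Pi; rewrite -EFinM lee_fin mulr_ge0 // mulr_ge0 ?a_ge0 ?z0.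
rewrite nneseriesZl; last by move=> i Pi; rewrite lee_fin mulr_ge0 ?a_ge0 ?z0.
by case: Oz => _ _ ->; rewrite mule1.
Qed.

Lemma opt b x lam : 0 < b -> Omega n a c x -> 0 <= lam -> (Fsum n b x < +oo)%E ->
  (forall i, P i -> forall y, 0 <= y -> (i = 1%N -> y <= c) ->
     y = x i \/ Gt b lam x i < expR (- (b * y)) + lam * (a i * y)) ->
  forall y, Omega n a c y ->
  (Fsum n b x <= Fsum n b y)%E /\ (Fsum n b y = Fsum n b x -> forall i, P i -> y i = x i).
Proof.
move=> b0 Ox l0 Fx hT y Oy.
have x0 := Omega_ge0 _ Ox; have y0 := Omega_ge0 _ Oy.
have yc1 : forall i, i = 1%N -> y i <= c by move=> i ->; case: Oy => /andP[].
have hle : forall i, P i -> Gt b lam x i <= Gt b lam y i.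
  move=> i Pi; case: (hT i Pi (y i) (y0 _ Pi) (yc1 i)) => [e|/ltW //]; by rewrite /Gt e.
have Fx0 : (0 <= Fsum n b x)%E.
  by apply: nneseries_ge0 => i _ _; rewrite lee_fin expR_ge0.
have Xfin : (Fsum n b x + lam%:E)%E \is a fin_num.
  by rewrite fin_numD /= andbT ge0_fin_numE.
have le1 : (Fsum n b x + lam%:E <= Fsum n b y + lam%:E)%E.
  rewrite -!sumG //; apply: lee_nneseries.
    by move=> i _ Pi; rewrite lee_fin Gt_ge0 ?x0.
  by move=> i Pi; rewrite lee_fin hle.
split; first by rewrite leeD2rE // in le1.
move=> eqF i Pi; case: (hT i Pi (y i) (y0 _ Pi) (yc1 i)) => // hlt.
exfalso.
set d := Gt b lam y i - Gt b lam x i.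
have d0 : 0 < d by rewrite subr_gt0.
have : (\sum_(0 <= j <oo | P j) (Gt b lam x j + (if j == i then d else 0))%:E <=
        \sum_(0 <= j <oo | P j) (Gt b lam y j)%:E)%E.
  apply: lee_nneseries.
    move=> j _ Pj; rewrite lee_fin addr_ge0 ?Gt_ge0 ?x0 //.
    by case: ifP => // _; rewrite ltW.
  move=> j Pj; rewrite lee_fin; case: eqP => [->|_]; first by rewrite /d addrC subrK.
  by rewrite addr0 hle.
under eq_eseriesr do rewrite EFinD.
rewrite nneseriesD; last 2 first.
- by move=> j _ Pj; rewrite lee_fin Gt_ge0 ?x0.
- by move=> j _ Pj; rewrite lee_fin; case: ifP => // _; rewrite ltW.
rewrite (@ser_single R 0 (fun j => if j == i then d else 0) P i) //; last first.
  by move=> k _ /negbTE ->.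
rewrite eqxx !sumG // eqF -{2}(adde0 (Fsum n b x + lam%:E)%E) leeD2lE // lee_fin.
by rewrite leNgt d0.
Qed.


Lemma ps_split (f : nat -> R) k N : lt_n n k -> (k < N)%N ->
  \sum_(0 <= i < N | P i) f i =
  \sum_(1 <= i < k.+1) f i + \sum_(0 <= i < N | (k < i)%N && P i) f i.
Proof.
move=> kn kN; rewrite (bigID (fun i => (i <= k)%N)) /=; congr (_ + _); last first.
  by apply: eq_bigl => i; rewrite -ltnNge andbC.
rewrite (eq_bigl (fun i => P i && (i < k.+1)%N)); last by move=> i; rewrite ltnS.
rewrite -big_nat_widen //.
rewrite (big_cat_nat (n := 1%N)) //=.
have -> : \sum_(0 <= i < 1 | P i) f i = 0 by rewrite big_mkcond big_nat1.
rewrite add0r big_nat_cond [in RHS]big_nat_cond; apply: eq_bigl => i.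
case: (boolP ((1 <= i)%N && (i < k.+1)%N)) => //= /andP[i1 ik].
by rewrite (P_le k i kn i1) // -ltnS.
Qed.

Definition xf (k : nat) (t nu b : R) : nat -> R :=
  fun i => if (i <= k)%N then t else b^-1 * (nu - ln (a i)).

Definition Ak k := \sum_(1 <= i < k.+1) a i.

Lemma gen1 k t nu b : lt_n n k ->
  (\sum_(0 <= i <oo | P i) (a i * xf k t nu b i)%:E)%E =
  (t * Ak k + b^-1 * (nu * D k + S k))%:E.
Proof.
move=> kn; apply: ser_lim.
apply: cvg_trans (cvgD (cvg_cst (t * Ak k))
   (cvgMl_tmp (a := b^-1) (cvgD (cvgMl_tmp (a := nu) (cvg_d k)) (cvg_s k)))).
apply: near_eq_cvg; near=> N => /=.
have kN : (k < N)%N by near: N; exists k.+1 => // p /=.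
rewrite (ps_split _ k N kn kN); congr (_ + _).
  rewrite /Ak mulr_sumr big_nat_cond [in RHS]big_nat_cond; apply: eq_bigr => i /andP[/andP[_ ik] _].
  by rewrite /xf -ltnS ik mulrC.
apply/esym; rewrite (eq_bigr (fun i => b^-1 * (nu * a i + etaR (a i)))); last first.
  move=> i /andP[ki Pi].
  rewrite /xf leqNgt ki /= /etaR ha_pos //; ring.
by rewrite -mulr_sumr big_split -mulr_sumr.
Unshelve. all: by end_near.
Qed.

Lemma gen2 k t nu b : lt_n n k -> 0 < b ->
  Fsum n b (xf k t nu b) = (k%:R * expR (- (b * t)) + expR (- nu) * D k)%:E.
Proof.
move=> kn b0; apply: ser_lim.
apply: cvg_trans (cvgD (cvg_cst (k%:R * expR (- (b * t))))
   (cvgMl_tmp (a := expR (- nu)) (cvg_d k))).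
apply: near_eq_cvg; near=> N => /=.
have kN : (k < N)%N by near: N; exists k.+1 => // p /=.
rewrite (ps_split _ k N kn kN); congr (_ + _).
  rewrite big_nat_cond (eq_bigr (fun _ => expR (- (b * t)))); last first.
    by move=> i /andP[/andP[_ ik] _]; rewrite /xf -ltnS ik.
  by rewrite -big_nat_cond sumr_const_nat subn1 /= mulr_natl.
rewrite mulr_sumr; apply: eq_bigr => i /andP[ki Pi].
rewrite /xf leqNgt ki /= mulrA mulfV ?gt_eqF // mul1r opprB.
rewrite -[_ - _]addrC expRD lnK // posrE; exact: ha_pos.
Unshelve. all: by end_near.
Qed.


Definition OptAt b x := [/\ Omega n a c x, (forall i, P i -> 0 <= x i),
  Fsum n b x = infOmega n a c b &
  (forall y, Omega n a c y -> (forall i, P i -> 0 <= y i) ->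
     Fsum n b y = infOmega n a c b -> forall i, P i -> y i = x i)].

Lemma opt_OptAt b x lam : 0 < b -> Omega n a c x -> 0 <= lam -> (Fsum n b x < +oo)%E ->
  (forall i, P i -> forall y, 0 <= y -> (i = 1%N -> y <= c) ->
     y = x i \/ Gt b lam x i < expR (- (b * y)) + lam * (a i * y)) ->
  OptAt b x.
Proof.
move=> b0 Ox l0 Fx hT.
have ho := @opt b x lam b0 Ox l0 Fx hT.
have hinf : Fsum n b x = infOmega n a c b.
  apply/eqP; rewrite eq_le; apply/andP; split.
    by apply: le_ereal_inf_tmp => _ [y Oy <-]; case: (ho y Oy).
  by apply: ereal_inf_lbound; exists x.
split => //; first exact: Omega_ge0 _ Ox.
move=> y Oy _ Fy; case: (ho y Oy) => _; apply; by rewrite Fy.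
Qed.

Lemma expR_ln_le (u v : R) : 0 < v -> (1 <= expR u * v) = (- u <= ln v).
Proof.
move=> v0; rewrite -{1}(lnK v0) -expRD -expR0 ler_expR; apply/idP/idP; lra.
Qed.


Definition xk k b := xf k 0 ((b - S k) / D k) b.

Lemma invb_le {b u w : R} : 0 < b -> u <= b * w -> b^-1 * u <= w.
Proof.
move=> b0 h; rewrite -(mulKf (negbT (gt_eqF b0)) w); apply: ler_wpM2l => //.
by rewrite invr_ge0 ltW.
Qed.

Lemma nu_le {d u w : R} : 0 < d -> u * d <= w * d -> u <= w.
Proof. by move=> d0; rewrite ler_pM2r. Qed.


Lemma Rk k b : lt_n n k -> 0 < b -> (bk n a c k.+1 <= b%:E)%E -> (b%:E <= bk n a c k)%E ->
  OptAt b (xk k b) /\ Fsum n b (xk k b) = (k%:R + D k * expR ((S k - b) / D k))%:E.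
Proof.
move=> kn b0 hlo hhi.
have Dk := D_pos k kn.
set nu := (b - S k) / D k.
have nuD : nu * D k = b - S k by rewrite /nu mulfVK ?gt_eqF.
have hF : Fsum n b (xk k b) = (k%:R + D k * expR ((S k - b) / D k))%:E.
  by rewrite /xk gen2 // mulr0 oppr0 expR0 mulr1 mulrC /nu -mulNr opprB.
have hlo' : S k + D k * ln (a k.+1) <= b by rewrite bk_S lee_fin in hlo.
have lnle : forall i, (k < i)%N -> P i -> ln (a i) <= nu.
  move=> i ki Pi; apply: (nu_le Dk); rewrite nuD.
  have : ln (a i) <= ln (a k.+1).
    by rewrite ler_ln ?posrE ?ha_pos ?P_lt //; apply: a_mono.
  have : 0 <= D k := ltW Dk.
  nra.
split => //.
apply: (@opt_OptAt b (xk k b) (b * expR (- nu))) => //.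
- split.
  + rewrite /xk /xf; case: (leqP 1 k) => k1.
      by rewrite lexx hc.
    have k0 : k = 0%N by lia.
    apply/andP; split.
      apply: mulr_ge0; first by rewrite invr_ge0 ltW.
      rewrite subr_ge0; apply: (lnle 1%N); [lia | exact: P1].
    apply: invb_le => //.
    subst k.
    have D0 := D_pos 0 lt_n0.
    move: hhi; rewrite bk0_eq.
    case: ifP => hcd.
      rewrite lee_fin ler_pdivlMr ?subr_gt0 // => h.
      apply: (nu_le D0); rewrite mulrBl divfK ?gt_eqF //.
      rewrite /v1 in h; nra.
    move/negbT: hcd; rewrite -leNgt => hcd _.
    apply: (nu_le D0); rewrite mulrBl divfK ?gt_eqF //.
    have := v1_ge0; rewrite /v1 => hv.
    have : b * 1 <= b * (c * D 0) by rewrite ler_wpM2l // ltW.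
    nra.
  + move=> i Pi i1; rewrite /xk /xf.
    case: (leqP i k) => ik.
      by rewrite (leq_trans (leq_pred i) ik).
    case: (leqP i.-1 k) => ik'.
      apply: mulr_ge0; first by rewrite invr_ge0 ltW.
      rewrite subr_ge0; apply: lnle => //; lia.
    apply: ler_wpM2l; first by rewrite invr_ge0 ltW.
    rewrite lerD2l lerN2 ler_ln ?posrE ?ha_pos //; last exact: (P_pred i Pi i1).
    have := ha_noninc i.-1 (P_pred i Pi i1); rewrite prednK; last lia.
    by apply.
  + rewrite /xk gen1 // mul0r add0r nuD subrK mulVf ?gt_eqF //.
- by apply: mulr_ge0; [exact: ltW|exact: expR_ge0].
- by rewrite hF ltry.
- move=> i Pi y y0 _; rewrite /Gt /xk /xf.
  case: (leqP i k) => ik.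
    apply: T2 => //.
    have i0 : (0 < i)%N by case/andP: Pi.
    have Pk : P k by apply: (P_le k k kn) => //; lia.
    rewrite -mulrA ler_pMr // expR_ln_le ?ha_pos // opprK.
    apply: le_trans (_ : ln (a k) <= _); last first.
      by rewrite ler_ln ?posrE ?ha_pos //; apply: a_mono.
    apply: (nu_le Dk); rewrite nuD.
    move: hhi; rewrite bk_eq // lee_fin; nra.
  apply: T1 => //.
  rewrite [b * (b^-1 * _)]mulrA mulfV ?gt_eqF // mul1r opprB -[_ - _]addrC expRD lnK ?posrE ?ha_pos //.
  by rewrite /nu (addrC (- S k) b); ring.
Qed.


Definition xc b := xf 1 c ((b * (1 - a 1 * c) - S 1) / D 1) b.

Lemma invb_ge {b u w : R} : 0 < b -> b * w <= u -> w <= b^-1 * u.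
Proof.
move=> b0 h; rewrite -(mulKf (negbT (gt_eqF b0)) w); apply: ler_wpM2l => //.
by rewrite invr_ge0 ltW.
Qed.

Lemma Rc b : c * D 0 < 1 -> 0 < b -> (bk n a c 0 <= b%:E)%E ->
  OptAt b (xc b) /\ Fsum n b (xc b) =
  (expR (- (b * c)) * (1 + D 1 * expR ((S 1 - b * (1 - c * D 0)) / D 1)))%:E.
Proof.
move=> hcd b0 hb.
have D1 := D_pos 1 lt_n1.
have hD0 : D 0 = a 1 + D 1 by have := D_peel 1 P1.
have hv : S 1 + D 1 * ln (a 1) <= b * (1 - c * D 0).
  move: hb; rewrite bk0_eq hcd lee_fin ler_pdivrMr ?subr_gt0 // -v1_eq.
  by rewrite mulrC.
have a1 := ha_pos 1 P1.
set nu := (b * (1 - a 1 * c) - S 1) / D 1.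
have nuD : nu * D 1 = b * (1 - a 1 * c) - S 1 by rewrite /nu mulfVK ?gt_eqF.
have hF : Fsum n b (xc b) =
  (expR (- (b * c)) * (1 + D 1 * expR ((S 1 - b * (1 - c * D 0)) / D 1)))%:E.
  rewrite /xc gen2 ?lt_n1 // mul1r; congr (_%:E).
  have -> : - ((b * (1 - a 1 * c) - S 1) / D 1) =
     - (b * c) + (S 1 - b * (1 - c * D 0)) / D 1.
    rewrite hD0; field; by rewrite gt_eqF.
  rewrite expRD; ring.
have lnle : forall i, (1 < i)%N -> P i -> ln (a i) <= ln (a 1).
  move=> i i1 Pi; rewrite ler_ln ?posrE ?ha_pos //; [apply: (a_mono 1 i) => //; lia | exact: P1].
split => //.
apply: (@opt_OptAt b (xc b) (b * expR (- nu))) => //.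
- split.
  + by rewrite /xc /xf /= lexx hc.
  + move=> i Pi i1; rewrite /xc /xf.
    have -> : (i <= 1)%N = false by lia.
    case: (leqP i.-1 1) => ik'.
      apply: invb_ge => //; apply: (nu_le D1); rewrite mulrBl nuD.
      have hi : i = 2%N by lia.
      have := lnle i i1 Pi; have : 0 <= D 1 := ltW D1.
      rewrite hD0 in hv; nra.
    apply: ler_wpM2l; first by rewrite invr_ge0 ltW.
    rewrite lerD2l lerN2 ler_ln ?posrE ?ha_pos //; last exact: (P_pred i Pi i1).
    have := ha_noninc i.-1 (P_pred i Pi i1); rewrite prednK; last lia.
    by apply.
  + rewrite /xc gen1 ?lt_n1 // nuD subrK mulKf ?gt_eqF //.
    by rewrite /Ak big_nat1; congr (_%:E); ring.
- by apply: mulr_ge0; [exact: ltW|exact: expR_ge0].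
- by rewrite hF ltry.
- move=> i Pi y y0 yc; rewrite /Gt /xc /xf.
  case: (leqP i 1) => ik.
    have i1 : i = 1%N by case/andP: Pi => i0 _; lia.
    apply: T3 => //; last exact: yc.
      by apply: mulr_ge0; [apply: mulr_ge0; [exact: ltW|exact: expR_ge0]| exact: a_ge0].
    rewrite i1 -mulrA; apply: ler_wpM2l; first exact: ltW.
    rewrite -{1}(lnK a1) -expRD ler_expR.
    apply: (nu_le D1); rewrite mulrDl mulNr nuD.
    rewrite hD0 in hv; nra.
  apply: T1 => //.
  rewrite [b * (b^-1 * _)]mulrA mulfV ?gt_eqF // mul1r opprB -[_ - _]addrC expRD lnK ?posrE ?ha_pos //.
  ring.
Qed.


Lemma bk_last_le b : 0 < b -> forall m, n = Some m -> (bk n a c m <= b%:E)%E.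
Proof. by move=> b0 m hm; rewrite (bk_last m hm) lee_fin ltW. Qed.

Lemma find_k b : 0 < b -> (b%:E < bk n a c 1)%E ->
  exists k, [/\ (0 < k)%N, lt_n n k, (bk n a c k.+1 <= b%:E)%E & (b%:E < bk n a c k)%E].
Proof.
move=> b0 hb1.
have hex : exists j, (bk n a c j.+1 <= b%:E)%E.
  by have [j hj] := ex_bk_lt b b0; exists j; rewrite ltW.
case: (ex_minnP hex) => k hk hmin.
have k0 : (0 < k)%N.
  by case: k hk hmin => // hk _; move: hb1; rewrite ltNge hk.
exists k; split => //.
- case E : n => [m|] //=; rewrite ltnNge; apply/negP => mk.
  have hm : (m.-1.+1 = m)%N by move: hn; rewrite E /=; lia.
  have := hmin m.-1; rewrite hm (bk_last_le b b0 m E) => /(_ isT); lia.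
- case: k k0 hk hmin => // k _ hk hmin.
  rewrite ltNge; apply/negP => h; have := hmin k h; lia.
Qed.

Lemma find_k' b : 0 < b -> (b%:E <= bk n a c 1)%E ->
  exists k, [/\ (0 < k)%N, lt_n n k, (bk n a c k.+1 < b%:E)%E & (b%:E <= bk n a c k)%E].
Proof.
move=> b0 hb1.
have hex : exists j, (bk n a c j.+1 < b%:E)%E by exact: ex_bk_lt b b0.
case: (ex_minnP hex) => k hk hmin.
have k0 : (0 < k)%N.
  by case: k hk hmin => // hk _; move: hb1; rewrite leNgt hk.
exists k; split => //.
- case E : n => [m|] //=; rewrite ltnNge; apply/negP => mk.
  have hm : (m.-1.+1 = m)%N by move: hn; rewrite E /=; lia.
  have := hmin m.-1; rewrite hm (bk_last m E) lte_fin b0 => /(_ isT); lia.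
- case: k k0 hk hmin => // k _ hk hmin.
  rewrite leNgt; apply/negP => h; have := hmin k h; lia.
Qed.

Lemma bk0_fin : (bk n a c 0 < +oo)%E -> c * D 0 < 1.
Proof. by rewrite bk0_eq; case: ifP. Qed.

Lemma exists_opt b : 0 < b -> exists x, OptAt b x.
Proof.
move=> b0; case: (boolP (bk n a c 0 <= b%:E)%E) => h0.
  have hcd : c * D 0 < 1 by apply: bk0_fin; apply: le_lt_trans h0 _; rewrite ltry.
  by exists (xc b); case: (Rc b hcd b0 h0).
rewrite -ltNge in h0.
case: (boolP (bk n a c 1 <= b%:E)%E) => h1.
  by exists (xk 0 b); case: (Rk 0 b lt_n0 b0 h1 (ltW h0)).
rewrite -ltNge in h1.
have [k [_ kn hlo hhi]] := find_k b b0 h1.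
by exists (xk k b); case: (Rk k b kn b0 hlo (ltW hhi)).
Qed.

Lemma opt_unique b x y : OptAt b x -> OptAt b y ->
  (forall i, P i -> y i = x i) /\ Fsum n b y = Fsum n b x.
Proof.
case=> Ox x0 Fx ux [Oy y0 Fy uy]; split; last by rewrite Fx Fy.
by apply: ux.
Qed.


Lemma xk_cont k i b0 : 0 < b0 -> {for b0, continuous (fun b : R => xk k b i)}.
Proof.
move=> b00; rewrite /xk /xf; case: (i <= k)%N; first exact: cvg_cst.
apply: cont_inv_mul; first by rewrite gt_eqF.
apply: cvgB; last exact: cvg_cst.
apply: cvgMr_tmp; apply: cvgB; [exact: cvg_id|exact: cvg_cst].
Qed.

Lemma xc_cont i b0 : 0 < b0 -> {for b0, continuous (fun b : R => xc b i)}.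
Proof.
move=> b00; rewrite /xc /xf; case: (i <= 1)%N; first exact: cvg_cst.
apply: cont_inv_mul; first by rewrite gt_eqF.
apply: cvgB; last exact: cvg_cst.
apply: cvgMr_tmp; apply: cvgB; last exact: cvg_cst.
apply: cvgMr_tmp; exact: cvg_id.
Qed.

Lemma right_reg b0 : 0 < b0 ->
  ((bk n a c 0 <= b0%:E)%E /\ c * D 0 < 1) \/
  exists k, [/\ lt_n n k, (bk n a c k.+1 <= b0%:E)%E & (b0%:E < bk n a c k)%E].
Proof.
move=> b00; case: (boolP (bk n a c 0 <= b0%:E)%E) => h0.
  left; split => //; apply: bk0_fin; apply: le_lt_trans h0 _; exact: ltry.
rewrite -ltNge in h0; right.
case: (boolP (bk n a c 1 <= b0%:E)%E) => h1; first by exists 0%N; split => //; exact: lt_n0.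
rewrite -ltNge in h1.
by have [k [_ kn hlo hhi]] := find_k b0 b00 h1; exists k.
Qed.

Lemma left_reg b0 : 0 < b0 ->
  ((bk n a c 0 < b0%:E)%E /\ c * D 0 < 1) \/
  exists k, [/\ lt_n n k, (bk n a c k.+1 < b0%:E)%E & (b0%:E <= bk n a c k)%E].
Proof.
move=> b00; case: (boolP (bk n a c 0 < b0%:E)%E) => h0.
  left; split => //; apply: bk0_fin; apply: lt_trans h0 _; exact: ltry.
rewrite -leNgt in h0; right.
case: (boolP (bk n a c 1 < b0%:E)%E) => h1; first by exists 0%N; split => //; exact: lt_n0.
rewrite -leNgt in h1.
by have [k [_ kn hlo hhi]] := find_k' b0 b00 h1; exists k.
Qed.

Lemma cont_xb (xb : R -> nat -> R) : (forall b, 0 < b -> OptAt b (xb b)) ->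
  forall i, P i -> forall b0 : R, 0 < b0 -> {for b0, continuous (fun b : R => xb b i)}.
Proof.
move=> hxb i Pi b0 b00.
have [d1 d10 [g1 [g1c H1]]] : exists2 d, 0 < d & exists g : R -> R,
    {for b0, continuous g} /\ forall b, b0 <= b -> b <= b0 + d -> xb b i = g b.
  case: (right_reg b0 b00) => [[h0 hcd]|[k [kn hlo hhi]]].
    exists 1 => //; exists (fun b => xc b i); split; first exact: xc_cont.
    move=> b hb _; have bpos : 0 < b by apply: lt_le_trans hb.
    have hb' : (bk n a c 0 <= b%:E)%E by apply: le_trans h0 _; rewrite lee_fin.
    case: (Rc b hcd bpos hb') => O _.
    by have [u _] := @opt_unique b _ _ (hxb b bpos) O; rewrite u.
  have [d d0 hd] := @ex_gap R _ _ hhi.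
  exists d => //; exists (fun b => xk k b i); split; first exact: xk_cont.
  move=> b hb hb2; have bpos : 0 < b by apply: lt_le_trans hb.
  have hlo' : (bk n a c k.+1 <= b%:E)%E by apply: le_trans hlo _; rewrite lee_fin.
  have hhi' : (b%:E <= bk n a c k)%E by apply: le_trans hd; rewrite lee_fin.
  case: (Rk k b kn bpos hlo' hhi') => O _.
  by have [u _] := @opt_unique b _ _ (hxb b bpos) O; rewrite u.
have [d2 [d20 d2b [g2 g2c H2]]] : exists d, [/\ 0 < d, d < b0 & exists2 g : R -> R,
    {for b0, continuous g} & forall b, b0 - d <= b -> b <= b0 -> xb b i = g b].
  case: (left_reg b0 b00) => [[h0 hcd]|[k [kn hlo hhi]]].
    have [d [d0 db hd]] := @ex_gapL R _ _ b00 h0.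
    exists d; split => //; exists (fun b => xc b i); first exact: xc_cont.
    move=> b hb _; have bpos : 0 < b by apply: lt_le_trans hb; rewrite subr_gt0.
    have hb' : (bk n a c 0 <= b%:E)%E by apply: le_trans hd _; rewrite lee_fin.
    case: (Rc b hcd bpos hb') => O _.
    by have [u _] := @opt_unique b _ _ (hxb b bpos) O; rewrite u.
  have [d [d0 db hd]] := @ex_gapL R _ _ b00 hlo.
  exists d; split => //; exists (fun b => xk k b i); first exact: xk_cont.
  move=> b hb hb2; have bpos : 0 < b by apply: lt_le_trans hb; rewrite subr_gt0.
  have hlo' : (bk n a c k.+1 <= b%:E)%E by apply: le_trans hd _; rewrite lee_fin.
  have hhi' : (b%:E <= bk n a c k)%E by apply: le_trans hhi; rewrite lee_fin.
  case: (Rk k b kn bpos hlo' hhi') => O _.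
  by have [u _] := @opt_unique b _ _ (hxb b bpos) O; rewrite u.
have G := @glue R (fun b => xb b i) g2 g1 b0 (Num.min d1 d2).
refine (G _ g2c g1c _ _).
- by rewrite lt_min d10 d20.
- move=> b hb1 hb2; apply: H2 => //; apply: le_trans hb1.
  by rewrite lerD2l lerN2 ge_min lexx orbT.
- move=> b hb1 hb2; apply: H1 => //; apply: le_trans hb2 _.
  by rewrite lerD2l ge_min lexx.
Qed.


Lemma lt_le_n k : lt_n n k -> le_n n k.
Proof. by case: n => [m|] //= km; rewrite ltnW. Qed.

Lemma ifE (p : bool) (r : R) : (if p then r%:E else 0%E) = (if p then r else 0)%:E.
Proof. by case: p. Qed.

Lemma inB_uniq k0 k b : lt_n n k0 -> lt_n n k -> inB n a c k0 b -> inB n a c k b -> k = k0.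
Proof.
move=> k0n kn /andP[l0 h0] /andP[l h].
case: (ltngtP k k0) => // kk.
- have := @bk_chain k.+1 k0 kk (lt_le_n k0 k0n).
  move=> hc'; have := le_lt_trans (le_trans hc' l) h0; by rewrite ltxx.
- have := @bk_chain k0.+1 k kk (lt_le_n k kn).
  move=> hc'; have := le_lt_trans (le_trans hc' l0) h; by rewrite ltxx.
Qed.

Lemma inB_bk0 k b : lt_n n k -> (bk n a c 0 <= b%:E)%E -> inB n a c k b = false.
Proof.
move=> kn h0; apply/negbTE/negP => /andP[_ h].
have := @bk_chain 0 k (leq0n k) (lt_le_n k kn) => hc'.
have := lt_le_trans h (le_trans hc' h0); by rewrite ltxx.
Qed.

Lemma zc_val b : 0 < b -> infOmega n a c b = zc n a c b.
Proof.
move=> b0; rewrite /zc.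
have -> : (\sum_(0 <= k <oo | lt_n n k)
      (if inB n a c k b then (termk n a k b)%:E else 0))%E =
  (\sum_(0 <= k <oo | lt_n n k) (if inB n a c k b then termk n a k b else 0)%:E)%E.
  by apply: eq_eseriesr => k _; rewrite ifE.
case: (boolP (bk n a c 0 <= b%:E)%E) => h0.
  have hcd : c * D 0 < 1 by apply: bk0_fin; apply: le_lt_trans h0 _; rewrite ltry.
  have [[_ _ <- _] ->] := Rc b hcd b0 h0.
  rewrite ser_zero ?add0e // => k kn; by rewrite inB_bk0.
rewrite -ltNge in h0; rewrite adde0.
have [k [kn hlo hhi] ] : exists k, [/\ lt_n n k, (bk n a c k.+1 <= b%:E)%E & (b%:E < bk n a c k)%E].
  case: (boolP (bk n a c 1 <= b%:E)%E) => h1; first by exists 0%N; split => //; exact: lt_n0.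
  rewrite -ltNge in h1.
  by have [k [_ kn hlo hhi]] := find_k b b0 h1; exists k.
have hk : inB n a c k b by rewrite /inB hlo hhi.
rewrite (@ser_single R 0 _ _ k) //; last first.
  move=> k' k'n k'k; case: ifP => // hk'.
  by have := inB_uniq k k' b kn k'n hk hk'; move/eqP: k'k.
rewrite hk; have [[_ _ <- _] ->] := Rk k b kn b0 hlo (ltW hhi); done.
Qed.

Lemma bk10 : c = 0 -> bk n a c 1 = bk n a c 0.
Proof.
move=> c0; rewrite bk0_eq c0 mul0r ltr01 subr0 divr1; done.
Qed.

Lemma z0_val b : c = 0 -> 0 < b -> infOmega n a c b = z0 n a c b.
Proof.
move=> c0 b0; rewrite /z0.
have -> : (\sum_(1 <= k <oo | lt_n n k)
      (if inB' n a c k b then (termk n a k b)%:E else 0))%E =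
  (\sum_(1 <= k <oo | lt_n n k) (if inB' n a c k b then termk n a k b else 0)%:E)%E.
  by apply: eq_eseriesr => k _; rewrite ifE.
have hcd : c * D 0 < 1 by rewrite c0 mul0r ltr01.
have h21 := bk_step 1 (ltnSn 0) lt_n1.
case: (boolP (bk n a c 1 <= b%:E)%E) => h1.
  have h0 : (bk n a c 0 <= b%:E)%E by rewrite -bk10.
  have [[_ _ <- _] ->] := Rc b hcd b0 h0.
  rewrite (@ser_single R 1 _ _ 1) //; first last.
  - move=> k kn k1; rewrite /inB' (negbTE k1); case: ifP => // hk.
    by rewrite inB_bk0 in hk.
  - exact: lt_n1.
  rewrite /inB' eqxx (le_trans h21 h1) /termc /termk c0 mul0r subr0 mulr0 oppr0 expR0 mul1r mulr1.
  done.
rewrite -ltNge in h1.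
have [k [k0 kn hlo hhi]] := find_k b b0 h1.
have hk : inB' n a c k b.
  rewrite /inB'; have [e|ne] := eqVneq k 1%N.
    by rewrite e in hlo.
  by rewrite /inB hlo hhi.
rewrite (@ser_single R 1 _ _ k) //; last first.
  move=> k' k'n k'k; case: ifP => // hk'; exfalso.
  move: hk'; rewrite /inB'; have [e|ne] := eqVneq k' 1%N.
    subst k' => h2.
    have k2 : (1 < k)%N by move: k'k k0; case: k {hk hlo hhi kn} => [|[|k]] //.
    have := @bk_chain 2 k k2 (lt_le_n k kn) => hc'.
    have := lt_le_trans hhi (le_trans hc' h2); by rewrite ltxx.
  move=> hk'.
  have hk2 : inB n a c k b by rewrite /inB hlo hhi.
  by have := inB_uniq k k' b kn k'n hk2 hk'; move/eqP: k'k.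
rewrite hk; have [[_ _ <- _] ->] := Rk k b kn b0 hlo (ltW hhi); done.
Qed.


Lemma main_sec : exists xb : R -> nat -> R,
    (forall b, 0 < b ->
       [/\ Omega n a c (xb b),
           (forall i, inI n i -> 0 <= xb b i),
           Fsum n b (xb b) = infOmega n a c b &
           (forall y, Omega n a c y -> (forall i, inI n i -> 0 <= y i) ->
              Fsum n b y = infOmega n a c b ->
              forall i, inI n i -> y i = xb b i)])
    /\ (forall b, 0 < b -> (bk n a c 1 <= b%:E)%E -> (b%:E <= bk n a c 0)%E ->
          (forall i, inI n i ->
             xb b i = b^-1 * ((b - ssum n a 0) / dsum n a 0 - ln (a i)))
          /\ Fsum n b (xb b)
             = (dsum n a 0 * expR ((ssum n a 0 - b) / dsum n a 0))%:E)
    /\ (forall b k, 0 < b -> (0 < k)%N -> lt_n n k ->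
          (bk n a c k.+1 <= b%:E)%E -> (b%:E < bk n a c k)%E ->
          [/\ (forall i, (1 <= i <= k)%N -> xb b i = 0),
              (forall i, inI n i -> (k < i)%N ->
                 xb b i = b^-1 * ((b - ssum n a k) / dsum n a k - ln (a i))) &
              Fsum n b (xb b)
              = (k%:R + dsum n a k * expR ((ssum n a k - b) / dsum n a k))%:E])
    /\ (forall b, 0 < b -> (bk n a c 0 < +oo)%E -> (bk n a c 0 < b%:E)%E ->
          [/\ xb b 1%N = c,
              (forall i, inI n i -> (1 < i)%N ->
                 xb b i = b^-1 * ((b * (1 - a 1%N * c) - ssum n a 1) / dsum n a 1
                                  - ln (a i))) &
              Fsum n b (xb b)
              = (expR (- (b * c)) *
                 (1 + dsum n a 1 *
                      expR ((ssum n a 1 - b * (1 - c * dsum n a 0)) / dsum n a 1)))%:E])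
    /\ (forall i, inI n i -> forall b0 : R, 0 < b0 ->
          {for b0, continuous (fun b : R => xb b i)})
    /\ (0 < c -> forall b, 0 < b -> infOmega n a c b = zc n a c b)
    /\ (c = 0 -> bk n a c 1 = bk n a c 0 /\
          forall b, 0 < b -> infOmega n a c b = z0 n a c b).
Proof.
have hex : forall b, exists x, 0 < b -> OptAt b x.
  move=> b; case: (ltrP 0 b) => b0.
    by have [x hx] := exists_opt b b0; exists x.
  by exists (fun _ => 0).
have [xb hxb] := choice hex.
exists xb; split; first exact: hxb.
split.
  move=> b b0 h1 h0.
  have [Ox Fx] := Rk 0 b lt_n0 b0 h1 h0.
  have [u e] := @opt_unique b _ _ (hxb b b0) Ox.
  split; last by rewrite -e Fx add0r.
  move=> i Pi; rewrite -u // /xk /xf.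
  by have -> : (i <= 0)%N = false by case/andP: Pi; lia.
split.
  move=> b k b0 k0 kn hlo hhi.
  have [Ox Fx] := Rk k b kn b0 hlo (ltW hhi).
  have [u e] := @opt_unique b _ _ (hxb b b0) Ox.
  split; last by rewrite -e Fx.
    move=> i /andP[i1 ik]; rewrite -u; last exact: (P_le k i kn).
    by rewrite /xk /xf ik.
  move=> i Pi ki; rewrite -u // /xk /xf.
  by have -> : (i <= k)%N = false by lia.
split.
  move=> b b0 hfin h0.
  have hcd := bk0_fin hfin.
  have [Ox Fx] := Rc b hcd b0 (ltW h0).
  have [u e] := @opt_unique b _ _ (hxb b b0) Ox.
  split; last by rewrite -e Fx.
    by rewrite -u ?P1 // /xc /xf.
  move=> i Pi i1; rewrite -u // /xc /xf.
  by have -> : (i <= 1)%N = false by lia.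
split; first exact: cont_xb.
split; first by move=> c0 b b0; exact: zc_val.
move=> c0; split; first exact: bk10.
by move=> b b0; exact: z0_val.
Qed.

End L2.

Theorem lemma2 (R : realType) (n : option nat) (a : nat -> R) (c : R)
  (hn : two_le n)
  (ha_pos : forall i, inI n i -> 0 < a i)
  (ha_noninc : forall i, inI n i -> inI n i.+1 -> a i.+1 <= a i)
  (ha_sum : (\sum_(0 <= i <oo | inI n i) (a i)%:E <= 1)%E)
  (ha_eta : (\sum_(0 <= i <oo | inI n i) (etaR (a i))%:E < +oo)%E)
  (hc : 0 <= c) :
  exists xb : R -> nat -> R,
    (* existence and uniqueness of the minimizer *)
    (forall b, 0 < b ->
       [/\ Omega n a c (xb b),
           (forall i, inI n i -> 0 <= xb b i),
           Fsum n b (xb b) = infOmega n a c b &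
           (forall y, Omega n a c y -> (forall i, inI n i -> 0 <= y i) ->
              Fsum n b y = infOmega n a c b ->
              forall i, inI n i -> y i = xb b i)])
    (* first case: b in [b_1, b_0] ∩ (0, +oo) *)
    /\ (forall b, 0 < b -> (bk n a c 1 <= b%:E)%E -> (b%:E <= bk n a c 0)%E ->
          (forall i, inI n i ->
             xb b i = b^-1 * ((b - ssum n a 0) / dsum n a 0 - ln (a i)))
          /\ Fsum n b (xb b)
             = (dsum n a 0 * expR ((ssum n a 0 - b) / dsum n a 0))%:E)
    (* second case: b in [b_{k+1}, b_k) ∩ (0, +oo), k in I_{n-1} *)
    /\ (forall b k, 0 < b -> (0 < k)%N -> lt_n n k ->
          (bk n a c k.+1 <= b%:E)%E -> (b%:E < bk n a c k)%E ->
          [/\ (forall i, (1 <= i <= k)%N -> xb b i = 0),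
              (forall i, inI n i -> (k < i)%N ->
                 xb b i = b^-1 * ((b - ssum n a k) / dsum n a k - ln (a i))) &
              Fsum n b (xb b)
              = (k%:R + dsum n a k * expR ((ssum n a k - b) / dsum n a k))%:E])
    (* third case: b_0 < +oo and b > b_0 *)
    /\ (forall b, 0 < b -> (bk n a c 0 < +oo)%E -> (bk n a c 0 < b%:E)%E ->
          [/\ xb b 1%N = c,
              (forall i, inI n i -> (1 < i)%N ->
                 xb b i = b^-1 * ((b * (1 - a 1%N * c) - ssum n a 1) / dsum n a 1
                                  - ln (a i))) &
              Fsum n b (xb b)
              = (expR (- (b * c)) *
                 (1 + dsum n a 1 *
                      expR ((ssum n a 1 - b * (1 - c * dsum n a 0)) / dsum n a 1)))%:E])
    (* continuity of b |-> x^b_i on (0, +oo) *)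
    /\ (forall i, inI n i -> forall b0 : R, 0 < b0 ->
          {for b0, continuous (fun b : R => xb b i)})
    (* value of the infimum for c > 0 *)
    /\ (0 < c -> forall b, 0 < b -> infOmega n a c b = zc n a c b)
    (* the case c = 0 *)
    /\ (c = 0 -> bk n a c 1 = bk n a c 0 /\
          forall b, 0 < b -> infOmega n a c b = z0 n a c b).
Proof.
by apply: main_sec.
Qed.
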